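(* Let $n=5$, let $x_1<x_2<\cdots<x_5$ be fixed real numbers and $Y_i=\beta_0+\beta_1x_i+\varepsilon_i$ ($i=1,\dots,5$) with $\varepsilon_1,\dots,\varepsilon_5$ i.i.d. with a continuous distribution. Let $s_1<s_2<\cdots<s_{10}$ be the ten slopes $S_{ij}=(Y_i-Y_j)/(x_i-x_j)$, $i<j$, sorted increasingly, and let $w_1<w_2<\cdots<w_{55}$ be the $55$ Walsh averages $(s_i+s_j)/2$, $1\le i\le j\le 10$, sorted increasingly. Then: (a) $s_2\le w_9$ if and only if $2s_2\le s_1+s_9$; (b) $w_{47}\le s_9$ if and only if $s_2+s_{10}\le 2s_9$.
   Context: Ties among the slopes and among the Walsh averages occur with probability zero and are ignored, i.e. all slopes are assumed pairwise distinct and all Walsh averages pairwise distinct. *)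

(* Defs.v *)
From HB Require Import structures.
From mathcomp Require Import all_boot all_order all_algebra.
From mathcomp Require Import reals.
Set Implicit Arguments. Unset Strict Implicit. Unset Printing Implicit Defensive.
Import Order.TTheory GRing.Theory Num.Theory.
Local Open Scope ring_scope.

Definition slope (R : realType) (x Y : 'I_5 -> R) (i j : 'I_5) : R :=
  (Y i - Y j) / (x i - x j).

Definition slopes (R : realType) (x Y : 'I_5 -> R) : seq R :=
  [seq slope x Y p.1 p.2 | p <- [seq p <- (enum [pred _ : 'I_5 * 'I_5 | true]) | (val p.1 < val p.2)%N]].

Definition sorted_slopes (R : realType) (x Y : 'I_5 -> R) : seq R :=
  sort <=%R (slopes x Y).

(* s_k, 1-based: k-th smallest slope. *)
Definition s_ (R : realType) (x Y : 'I_5 -> R) (k : nat) : R :=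
  nth 0 (sorted_slopes x Y) k.-1.

Definition walsh (R : realType) (x Y : 'I_5 -> R) : seq R :=
  [seq (s_ x Y (val p.1).+1 + s_ x Y (val p.2).+1) / 2
     | p <- [seq p <- (enum [pred _ : 'I_10 * 'I_10 | true]) | (val p.1 <= val p.2)%N]].

(* w_k, 1-based: k-th smallest Walsh average. *)
Definition w_ (R : realType) (x Y : 'I_5 -> R) (k : nat) : R :=
  nth 0 (sort <=%R (walsh x Y)) k.-1.

(* Main.v *)
Require Import Defs.
From HB Require Import structures.
From mathcomp Require Import all_boot all_order all_algebra.
From mathcomp Require Import reals.
From mathcomp Require Import lra.
Import Order.TTheory GRing.Theory Num.Theory.
Local Open Scope ring_scope.

Lemma enum_pairs n m (P : nat -> nat -> bool) :
  [seq (val p.1, val p.2) | p <- [seq p <- (enum [pred _ : 'I_n * 'I_m | true]) | P (val p.1) (val p.2)]]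
  = [seq q <- [seq (i, j) | i <- iota 0 n, j <- iota 0 m] | P q.1 q.2].
Proof.
rewrite (@eq_enum _ _ {: 'I_n * 'I_m}) //.
rewrite enumT unlock /= /prod_enum.
rewrite -(filter_map (fun p : (ordinal n * ordinal m) => (val p.1, val p.2)) (fun q => P q.1 q.2)).
congr filter.
rewrite -(val_enum_ord n) -(val_enum_ord m).
elim: (enum 'I_n) => //= a s IH. by rewrite map_cat IH -!map_comp.
Qed.

Lemma map_pairs T n m (P : nat -> nat -> bool) (g : nat -> nat -> T) :
  [seq g (val p.1) (val p.2) | p <- [seq p <- (enum [pred _ : 'I_n * 'I_m | true]) | P (val p.1) (val p.2)]]
  = [seq g q.1 q.2 | q <- [seq q <- [seq (i, j) | i <- iota 0 n, j <- iota 0 m] | P q.1 q.2]].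
Proof. by rewrite -enum_pairs -map_comp. Qed.

Lemma le_nth_count (R : realType) (u : seq R) v k :
  sorted <=%R u -> (k < size u)%N -> (v <= nth 0 u k) = (count (< v) u <= k)%N.
Proof.
elim: u k => //= a u IH k.
rewrite path_sortedE; last exact: le_trans.
move=> /andP[Ha Hs] Hk.
have all0 : v <= a -> count (< v) u = 0%N.
  move=> va; apply/eqP; rewrite eqn0Ngt -has_count; apply/hasPn => y /(allP Ha) ay.
  by rewrite /= -leNgt (le_trans va ay).
case: k Hk => [|k] Hk /=.
  case: (leP v a) => va; first by rewrite all0.
  by [].
case: (leP v a) => va.
  rewrite all0 // (le_trans va) //; apply: (allP Ha); exact: mem_nth.
by rewrite add1n ltnS IH.
Qed.


Lemma lt_nth_count (R : realType) (u : seq R) v k :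
  sorted <=%R u -> (k < size u)%N -> (v < nth 0 u k) = (count (<= v) u <= k)%N.
Proof.
elim: u k => //= a u IH k.
rewrite path_sortedE; last exact: le_trans.
move=> /andP[Ha Hs] Hk.
have all0 : v < a -> count (<= v) u = 0%N.
  move=> va; apply/eqP; rewrite eqn0Ngt -has_count; apply/hasPn => y /(allP Ha) ay.
  by rewrite /= -ltNge (lt_le_trans va ay).
case: k Hk => [|k] Hk /=.
  case: (ltP v a) => va; first by rewrite all0.
  by [].
case: (ltP v a) => va.
  rewrite all0 // (lt_le_trans va) //; apply: (allP Ha); exact: mem_nth.
by rewrite add1n ltnS IH.
Qed.

Section Mid.
Variable R : realType.
Implicit Types x y v : R.
Lemma midlt1 x y v : x < v -> y <= v -> (x + y) / 2 < v. Proof. move=> *; lra. Qed.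
Lemma midlt2 x y v : x <= v -> y < v -> (x + y) / 2 < v. Proof. move=> *; lra. Qed.
Lemma midge x y v : v <= x -> v <= y -> v <= (x + y) / 2. Proof. move=> *; lra. Qed.
Lemma midle x y v : x <= v -> y <= v -> (x + y) / 2 <= v. Proof. move=> *; lra. Qed.
Lemma midgt1 x y v : v < x -> v <= y -> v < (x + y) / 2. Proof. move=> *; lra. Qed.
Lemma midgt2 x y v : v <= x -> v < y -> v < (x + y) / 2. Proof. move=> *; lra. Qed.
Lemma midA1 x y v w : x + w < 2 * v -> y <= w -> (x + y) / 2 < v. Proof. move=> *; lra. Qed.
Lemma midA2 x y v w : 2 * v <= x + w -> w <= y -> v <= (x + y) / 2. Proof. move=> *; lra. Qed.
Lemma midB1 x y v w : 2 * v < w + y -> w <= x -> v < (x + y) / 2. Proof. move=> *; lra. Qed.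
Lemma midB2 x y v w : x <= w -> w + y <= 2 * v -> (x + y) / 2 <= v. Proof. move=> *; lra. Qed.
End Mid.

Ltac le_b := first [ exact: lexx | assumption | apply: ltW; assumption ].

Ltac cheap_atoms :=
  repeat match goal with
  | |- context [ ((?x + ?y) / 2 < ?v)%R ] => let E := fresh "E" in
      first [ have E : ((x + y) / 2 < v)%R = true by
                apply/idP; first [ apply: midlt1; [assumption|le_b] | apply: midlt2; [le_b|assumption] | apply: midA1; [eassumption|le_b] ]
            | have E : ((x + y) / 2 < v)%R = false by
                apply/negbTE; rewrite -leNgt; first [ apply: midge; le_b | apply: midA2; [eassumption|le_b] ] ];
      rewrite E; clear E
  | |- context [ ((?x + ?y) / 2 <= ?v)%R ] => let E := fresh "E" in
      first [ have E : ((x + y) / 2 <= v)%R = true by apply/idP; first [ apply: midle; le_b | (apply: midB2; [idtac|eassumption]; le_b) ]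
            | have E : ((x + y) / 2 <= v)%R = false by
                apply/negbTE; rewrite -ltNge; first [ apply: midgt1; [assumption|le_b] | apply: midgt2; [le_b|assumption] | apply: midB1; [eassumption|le_b] ] ];
      rewrite E; clear E
  end.

Ltac gen_atoms :=
  repeat match goal with
  | |- context [ (?u < ?v)%R ] => let E := fresh "E" in set E := (u < v)%R; clearbody E
  | |- context [ (?u <= ?v)%R ] => let E := fresh "E" in set E := (u <= v)%R; clearbody E
  end.

Theorem theorem3 (R : realType) (x : 'I_5 -> R) (beta0 beta1 : R)
    (eps : 'I_5 -> R)
    (hx : forall i j : 'I_5, (i < j)%N -> x i < x j) :
  let Y := fun i => beta0 + beta1 * x i + eps i in
  uniq (slopes x Y) -> uniq (walsh x Y) ->
  (s_ x Y 2 <= w_ x Y 9 <-> 2 * s_ x Y 2 <= s_ x Y 1 + s_ x Y 9) /\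
  (w_ x Y 47 <= s_ x Y 9 <-> s_ x Y 2 + s_ x Y 10 <= 2 * s_ x Y 9).
Proof.
move=> Y US _.
have Hsz : size (sorted_slopes x Y) = 10%N.
  rewrite size_sort /slopes size_map.
  rewrite -(size_map (fun p : 'I_5 * 'I_5 => (val p.1, val p.2))).
  by rewrite (enum_pairs 5 5 (fun i j => (i < j)%N)).
have Hso : sorted <%R (sorted_slopes x Y) by rewrite sort_lt_sorted.
rewrite /w_ /walsh /s_.
move: Hsz Hso; case: (sorted_slopes x Y) => [|b1 [|b2 [|b3 [|b4 [|b5 [|b6 [|b7 [|b8 [|b9 [|b10 [|? ?]]]]]]]]]]] //= _.
move=> /and5P[h1_2 h2_3 h3_4 h4_5 /and5P[h5_6 h6_7 h7_8 h8_9 /andP[h9_10 _]]].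
have h1_3 := lt_trans h1_2 h2_3.
have h2_4 := lt_trans h2_3 h3_4.
have h3_5 := lt_trans h3_4 h4_5.
have h4_6 := lt_trans h4_5 h5_6.
have h5_7 := lt_trans h5_6 h6_7.
have h6_8 := lt_trans h6_7 h7_8.
have h7_9 := lt_trans h7_8 h8_9.
have h8_10 := lt_trans h8_9 h9_10.
have h1_4 := lt_trans h1_3 h3_4.
have h2_5 := lt_trans h2_4 h4_5.
have h3_6 := lt_trans h3_5 h5_6.
have h4_7 := lt_trans h4_6 h6_7.
have h5_8 := lt_trans h5_7 h7_8.
have h6_9 := lt_trans h6_8 h8_9.
have h7_10 := lt_trans h7_9 h9_10.
have h1_5 := lt_trans h1_4 h4_5.
have h2_6 := lt_trans h2_5 h5_6.
have h3_7 := lt_trans h3_6 h6_7.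
have h4_8 := lt_trans h4_7 h7_8.
have h5_9 := lt_trans h5_8 h8_9.
have h6_10 := lt_trans h6_9 h9_10.
have h1_6 := lt_trans h1_5 h5_6.
have h2_7 := lt_trans h2_6 h6_7.
have h3_8 := lt_trans h3_7 h7_8.
have h4_9 := lt_trans h4_8 h8_9.
have h5_10 := lt_trans h5_9 h9_10.
have h1_7 := lt_trans h1_6 h6_7.
have h2_8 := lt_trans h2_7 h7_8.
have h3_9 := lt_trans h3_8 h8_9.
have h4_10 := lt_trans h4_9 h9_10.
have h1_8 := lt_trans h1_7 h7_8.
have h2_9 := lt_trans h2_8 h8_9.
have h3_10 := lt_trans h3_9 h9_10.
have h1_9 := lt_trans h1_8 h8_9.
have h2_10 := lt_trans h2_9 h9_10.
have h1_10 := lt_trans h1_9 h9_10.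

set W := (X in sort _ X).
have EW : W = [seq (nth 0 [:: b1; b2; b3; b4; b5; b6; b7; b8; b9; b10] q.1 +
               nth 0 [:: b1; b2; b3; b4; b5; b6; b7; b8; b9; b10] q.2) / 2
     | q <- [seq q <- [seq (i, j) | i <- iota 0 10, j <- iota 0 10] | (q.1 <= q.2)%N]].
  by rewrite /W (map_pairs _ 10 10 (fun i j => (i <= j)%N)
   (fun i j => (nth 0 [:: b1; b2; b3; b4; b5; b6; b7; b8; b9; b10] i +
               nth 0 [:: b1; b2; b3; b4; b5; b6; b7; b8; b9; b10] j) / 2)); reflexivity.
clearbody W. simpl in EW.
have HW : sorted <=%R (sort <=%R W) by apply: sort_sorted; exact: le_total.
have HWs : size (sort <=%R W) = 55%N by rewrite size_sort EW.
have PS : perm_eq (sort <=%R W) W by rewrite perm_sort.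
split.
  rewrite le_nth_count ?HWs // (permP PS) EW /=.
  case: (ltP (b1 + b9) (2 * b2)) => c; clear EW HW HWs PS hx US Y; cheap_atoms; gen_atoms;
  repeat match goal with E : bool |- _ => case: E end;
  vm_compute; tauto.
rewrite leNgt lt_nth_count ?HWs // (permP PS) EW /=.
case: (ltP (2 * b9) (b2 + b10)) => c; clear EW HW HWs PS hx US Y; cheap_atoms; gen_atoms;
  repeat match goal with E : bool |- _ => case: E end;
  vm_compute; tauto.
Qed.
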